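(* For all $t,s,r\in\Lambda^\infty$: if $t\to^\infty_{\beta\bot}s$ and $s\to^*_\beta r$, then $t\to^\infty_{\beta\bot}r$.
   Context: Fix an infinite set $V$ of variables and a set $C$ of constants with $V\cap C=\emptyset$, containing a distinguished constant $\bot$. $\Lambda^\infty$ is the set of infinitary lambda-terms: all finite and infinite terms generated coinductively by $t ::= c\mid x\mid t\,t\mid\lambda x.t$, identified up to $\alpha$-equivalence; $s[t/x]$ is capture-avoiding substitution; $\equiv$ is identity; an atom is a variable or constant. For $R\subseteq\Lambda^\infty\times\Lambda^\infty$, the compatible closure $\to_R$ is the least relation with $(s,t)\in R\Rightarrow s\to_R t$ and $s\to_R s'\Rightarrow st\to_R s't,\ ts\to_R ts',\ \lambda x.s\to_R\lambda x.s'$. $\to_\beta$ is the compatible closure of $R_\beta=\{((\lambda x.s)t,s[t/x])\}$ and $\to^*_\beta$ its reflexive-transitive closure. A term is in head normal form (hnf) if it is $\lambda x_1\ldots x_m.\,a\,t_1\ldots t_n$ ($m,n\ge0$, $a$ an atom, $a\not\equiv\bot$); $t$ has a hnf if $t\to^*_\beta t'$ for some $t'$ in hnf. $R_\bot=\{(t,\bot)\mid t\text{ has no hnf}, t\not\equiv\bot\}$; $\to_{\beta\bot}$ is the compatible closure of $R_\beta\cup R_\bot$. The infinitary closure $\to^\infty_{\beta\bot}$ is the greatest relation such that whenever $s\to^\infty_{\beta\bot}t$ (with $\to^*$ the reflexive-transitive closure of $\to_{\beta\bot}$): $t\equiv a$ atom and $s\to^*a$; or $t\equiv t_1't_2'$,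 $s\to^*t_1t_2$, $t_i\to^\infty_{\beta\bot}t_i'$; or $t\equiv\lambda x.r'$, $s\to^*\lambda x.r$, $r\to^\infty_{\beta\bot}r'$. *)

(* Defs.v *)
(* Infinitary lambda-terms as a coinductive type with
   de Bruijn indices (alpha-equivalence is built in); identity of
   (possibly infinite) terms is bisimilarity [bisim]. *)
From Stdlib Require Import Arith.

Set Implicit Arguments.

Section InfLambda.

Context (C : Type) (bot : C).

CoInductive term : Type :=
| Var : nat -> term
| Cst : C -> term
| App : term -> term -> term
| Lam : term -> term.

CoInductive bisim : term -> term -> Prop :=
| bisim_var n : bisim (Var n) (Var n)
| bisim_cst c : bisim (Cst c) (Cst c)
| bisim_app s1 s2 t1 t2 :
    bisim s1 t1 -> bisim s2 t2 -> bisim (App s1 s2) (App t1 t2)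
| bisim_lam s t : bisim s t -> bisim (Lam s) (Lam t).

CoFixpoint lift (d c : nat) (t : term) : term :=
  match t with
  | Var n => if n <? c then Var n else Var (n + d)
  | Cst a => Cst a
  | App t1 t2 => App (lift d c t1) (lift d c t2)
  | Lam t1 => Lam (lift d (S c) t1)
  end.

CoFixpoint subst (k : nat) (u : term) (t : term) : term :=
  match t with
  | Var n => if n <? k then Var n
             else if n =? k then lift k 0 u
             else Var (pred n)
  | Cst a => Cst a
  | App t1 t2 => App (subst k u t1) (subst k u t2)
  | Lam t1 => Lam (subst (S k) u t1)
  end.

Definition subst0 (s t : term) : term := subst 0 t s.

Definition R_beta (a b : term) : Prop :=
  exists s t, a = App (Lam s) t /\ bisim b (subst0 s t).

Inductive compat (R : term -> term -> Prop) : term -> term -> Prop :=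
| compat_base s t : R s t -> compat R s t
| compat_appl s s' t : compat R s s' -> compat R (App s t) (App s' t)
| compat_appr s s' t : compat R s s' -> compat R (App t s) (App t s')
| compat_lam s s' : compat R s s' -> compat R (Lam s) (Lam s').

Inductive star (R : term -> term -> Prop) : term -> term -> Prop :=
| star_refl s t : bisim s t -> star R s t
| star_step s u t : R s u -> star R u t -> star R s t.

Definition beta_step := compat R_beta.
Definition beta_star := star beta_step.

Inductive head_atom_app : term -> Prop :=
| haa_var n : head_atom_app (Var n)
| haa_cst c : c <> bot -> head_atom_app (Cst c)
| haa_app s t : head_atom_app s -> head_atom_app (App s t).

Inductive hnf : term -> Prop :=
| hnf_base t : head_atom_app t -> hnf t
| hnf_lam t : hnf t -> hnf (Lam t).

Definition has_hnf (t : term) : Prop :=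
  exists t', beta_star t t' /\ hnf t'.

Definition is_bot (t : term) : Prop :=
  match t with Cst c => c = bot | _ => False end.

Definition R_bot (a b : term) : Prop :=
  ~ has_hnf a /\ ~ is_bot a /\ b = Cst bot.

Definition R_beta_bot (a b : term) : Prop := R_beta a b \/ R_bot a b.

Definition bb_step := compat R_beta_bot.
Definition bb_star := star bb_step.

CoInductive bb_inf : term -> term -> Prop :=
| inf_var s n : bb_star s (Var n) -> bb_inf s (Var n)
| inf_cst s c : bb_star s (Cst c) -> bb_inf s (Cst c)
| inf_app s t1 t2 t1' t2' :
    bb_star s (App t1 t2) -> bb_inf t1 t1' -> bb_inf t2 t2' ->
    bb_inf s (App t1' t2')
| inf_lam s r r' :
    bb_star s (Lam r) -> bb_inf r r' -> bb_inf s (Lam r').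

End InfLambda.

(* Main.v *)
Require Import Defs.
From Stdlib Require Import Arith Lia.
Arguments Var {C} _.

Section Main.
Context {C : Type}.
Notation term := (term C).
Implicit Types s t u v w x y z r p q a b X : term.

Definition frob (t : term) : term :=
  match t with Var n => Var n | Cst c => Cst c | App a b => App a b | Lam a => Lam a end.
Lemma frob_eq t : t = frob t. Proof. destruct t; reflexivity. Qed.

Lemma lift_Var d c n : lift d c (Var n : term) = if n <? c then Var n else Var (n + d).
Proof. rewrite (frob_eq (lift d c (Var n))). simpl. destruct (n <? c); reflexivity. Qed.
Lemma lift_Cst d c (a : C) : lift d c (Cst a) = Cst a.
Proof. rewrite (frob_eq (lift d c _)). reflexivity. Qed.
Lemma lift_App d c (a b : term) : lift d c (App a b) = App (lift d c a) (lift d c b).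
Proof. rewrite (frob_eq (lift d c _)). reflexivity. Qed.
Lemma lift_Lam d c (a : term) : lift d c (Lam a) = Lam (lift d (S c) a).
Proof. rewrite (frob_eq (lift d c _)). reflexivity. Qed.
Lemma subst_Var k u n : subst k u (Var n : term) =
  if n <? k then Var n else if n =? k then lift k 0 u else Var (pred n).
Proof. rewrite (frob_eq (subst k u _)). simpl. destruct (n <? k), (n =? k); try reflexivity.
  destruct (lift k 0 u); reflexivity. Qed.
Lemma subst_Cst k u (a : C) : subst k u (Cst a) = Cst a.
Proof. rewrite (frob_eq (subst k u _)). reflexivity. Qed.
Lemma subst_App k (u a b : term) : subst k u (App a b) = App (subst k u a) (subst k u b).
Proof. rewrite (frob_eq (subst k u _)). reflexivity. Qed.
Lemma subst_Lam k (u a : term) : subst k u (Lam a) = Lam (subst (S k) u a).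
Proof. rewrite (frob_eq (subst k u _)). reflexivity. Qed.

Lemma lift_Var_lt d c n : n < c -> lift d c (Var n : term) = Var n.
Proof. intro H. rewrite lift_Var. replace (n <? c) with true; auto. symmetry; apply Nat.ltb_lt; auto. Qed.
Lemma lift_Var_ge d c n : c <= n -> lift d c (Var n : term) = Var (n + d).
Proof. intro H. rewrite lift_Var. replace (n <? c) with false; auto. symmetry; apply Nat.ltb_ge; auto. Qed.
Lemma subst_Var_lt k u n : n < k -> subst k u (Var n : term) = Var n.
Proof. intro H. rewrite subst_Var. replace (n <? k) with true; auto. symmetry; apply Nat.ltb_lt; auto. Qed.
Lemma subst_Var_eq k u : subst k u (Var k : term) = lift k 0 u.
Proof. rewrite subst_Var. rewrite Nat.ltb_irrefl, Nat.eqb_refl. auto. Qed.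
Lemma subst_Var_gt k u n : k < n -> subst k u (Var n : term) = Var (pred n).
Proof. intro H. rewrite subst_Var. replace (n <? k) with false by (symmetry; apply Nat.ltb_ge; lia).
  replace (n =? k) with false by (symmetry; apply Nat.eqb_neq; lia). auto. Qed.

Ltac simp := repeat (rewrite ?lift_Cst, ?lift_App, ?lift_Lam, ?subst_Cst, ?subst_App, ?subst_Lam).

Definition bisimF (Q : term -> term -> Prop) (x y : term) : Prop :=
  (exists n, x = Var n /\ y = Var n) \/ (exists c, x = Cst c /\ y = Cst c) \/
  (exists a1 a2 b1 b2, x = App a1 a2 /\ y = App b1 b2 /\ Q a1 b1 /\ Q a2 b2) \/
  (exists a b, x = Lam a /\ y = Lam b /\ Q a b).

Lemma bisim_coind (P : term -> term -> Prop) :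
  (forall x y, P x y -> bisimF (fun a b => P a b \/ bisim a b) x y) ->
  forall x y, P x y -> bisim x y.
Proof.
  intro HP. cofix CIH. intros x y H.
  destruct (HP x y H) as [[n [-> ->]]|[[c [-> ->]]|[[a1 [a2 [b1 [b2 [-> [-> [H1 H2]]]]]]]|[a [b [-> [-> H1]]]]]]].
  - constructor.
  - constructor.
  - apply bisim_app; [destruct H1 as [H1|H1]|destruct H2 as [H3|H3]]; auto.
  - apply bisim_lam; destruct H1 as [H1|H1]; auto.
Qed.

Lemma bisim_unfold Q x y : bisim x y -> bisimF (fun a b => Q a b \/ bisim a b) x y.
Proof. intro H; destruct H; unfold bisimF.
  - left; eauto.
  - right; left; eauto.
  - right; right; left; do 4 eexists; split; [reflexivity|split;[reflexivity|split; right; eauto]].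
  - right; right; right; do 2 eexists; split; [reflexivity|split;[reflexivity|right; eauto]].
Qed.

Ltac bisimF_tac := unfold bisimF; first [ left; eexists; split; reflexivity | right; left; eexists; split; reflexivity | right; right; left; do 4 eexists; split; [reflexivity|split;[reflexivity|split]] | right; right; right; do 2 eexists; split; [reflexivity|split;[reflexivity|idtac]] ].

Lemma bisim_refl t : bisim t t.
Proof. apply (bisim_coind (fun x y => x = y)); auto. intros x y <-.
  destruct x; bisimF_tac; auto. Qed.

Lemma bisim_sym s t : bisim s t -> bisim t s.
Proof. apply (bisim_coind (fun x y => bisim y x)). intros x y H.
  destruct H; bisimF_tac; auto. Qed.

Lemma bisim_trans s t u : bisim s t -> bisim t u -> bisim s u.
Proof. intros H1 H2. apply (bisim_coind (fun x z => exists y, bisim x y /\ bisim y z)); eauto.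
  clear. intros x z [y [H1 H2]]. destruct H1; inversion H2; subst; bisimF_tac; left; eauto. Qed.


Ltac vsplit := repeat (rewrite ?lift_Var, ?subst_Var; repeat match goal with
  | |- context [?a <? ?b] => destruct (Nat.ltb_spec a b)
  | |- context [?a =? ?b] => destruct (Nat.eqb_spec a b) end); try (exfalso; lia).
Ltac var_close := match goal with |- bisim (Var ?a) (Var ?b) => replace a with b by lia; apply bisim_refl end.

Lemma lift_bisim d c a b : bisim a b -> bisim (lift d c a) (lift d c b).
Proof. intro H. apply (bisim_coind (fun x y => exists d c a b, x = lift d c a /\ y = lift d c b /\ bisim a b)); eauto 10.
  clear. intros x y (d & c & a & b & -> & -> & H). destruct H.
  - apply bisim_unfold. apply bisim_refl.
  - simp. bisimF_tac.
  - simp. bisimF_tac; left; eauto 10.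
  - simp. bisimF_tac; left; eauto 10.
Qed.

Lemma subst_bisim k u u' a a' : bisim a a' -> bisim u u' -> bisim (subst k u a) (subst k u' a').
Proof. intros H Hu. apply (bisim_coind (fun x y => exists k a a', x = subst k u a /\ y = subst k u' a' /\ bisim a a')); eauto 10.
  clear H k a a'. intros x y (k & a & a' & -> & -> & H). destruct H.
  - apply bisim_unfold. vsplit; try apply bisim_refl. apply lift_bisim; auto.
  - simp. bisimF_tac.
  - simp. bisimF_tac; left; eauto 10.
  - simp. bisimF_tac; left; eauto 10.
Qed.

Lemma lift_lift_b j c i m v : c <= m -> bisim (lift j (c + i) (lift m i v)) (lift (j + m) i v).
Proof. intro H. apply (bisim_coind (fun x y => exists c i ci v, c <= m /\ ci = c + i /\ x = lift j ci (lift m i v) /\ y = lift (j+m) i v)); eauto 10.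
  clear. intros x y (c & i & ci & v & H & -> & -> & ->). destruct v.
  - apply bisim_unfold. vsplit; var_close.
  - simp. bisimF_tac.
  - simp. bisimF_tac; left; eauto 10.
  - simp. bisimF_tac; left. exists c, (S i), (S (c + i)), v. repeat split; auto; lia.
Qed.

Lemma subst_lift_c j i m X v : j <= m -> bisim (subst (j + i) X (lift (S m) i v)) (lift m i v).
Proof. intro H. apply (bisim_coind (fun x y => exists i ji v, ji = j + i /\ x = subst ji X (lift (S m) i v) /\ y = lift m i v)); eauto 10.
  clear -H. intros x y (i & ji & v & -> & -> & ->). destruct v.
  - apply bisim_unfold. vsplit; var_close.
  - simp. bisimF_tac.
  - simp. bisimF_tac; left; eauto 10.
  - simp. bisimF_tac; left. exists (S i), (S (j + i)), v. repeat split; auto; lia.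
Qed.

Lemma lift_lift_d d c j i b : bisim (lift d (c + j + i) (lift j i b)) (lift j i (lift d (c + i) b)).
Proof. apply (bisim_coind (fun x y => exists i cji ci b, cji = c + j + i /\ ci = c + i /\ x = lift d cji (lift j i b) /\ y = lift j i (lift d ci b))); eauto 10.
  clear. intros x y (i & cji & ci & b & -> & -> & -> & ->). destruct b.
  - apply bisim_unfold. vsplit; var_close.
  - simp. bisimF_tac.
  - simp. bisimF_tac; left; eauto 10.
  - simp. bisimF_tac; left. exists (S i), (S (c + j + i)), (S (c + i)), b. repeat split; auto; lia.
Qed.

Lemma subst_lift_a c j k v b : bisim (subst (c + j + k) v (lift j c b)) (lift j c (subst (c + k) v b)).
Proof. apply (bisim_coind (fun x y => exists c cjk ck b, cjk = c + j + k /\ ck = c + k /\ x = subst cjk v (lift j c b) /\ y = lift j c (subst ck v b))); eauto 10.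
  clear. intros x y (c & cjk & ck & b & -> & -> & -> & ->). destruct b.
  - apply bisim_unfold. vsplit; try var_close.
    + subst n. apply bisim_sym. replace (c + j + k) with (j + (c + k)) by lia.
      replace c with (c + 0) at 1 by lia. apply lift_lift_b; lia.
  - simp. bisimF_tac.
  - simp. bisimF_tac; left; eauto 10.
  - simp. bisimF_tac; left. exists (S c), (S (c + j + k)), (S (c + k)), b. repeat split; auto; lia.
Qed.


Lemma subst_subst k j v b P : bisim (subst (k + j) v (subst j b P)) (subst j (subst k v b) (subst (S (k + j)) v P)).
Proof. apply (bisim_coind (fun x y => exists j kj P, kj = k + j /\ x = subst kj v (subst j b P) /\ y = subst j (subst k v b) (subst (S kj) v P))); eauto 10.
  clear. intros x y (j & kj & P & -> & -> & ->). destruct P.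
  - apply bisim_unfold. vsplit; try var_close.
    + subst n. replace (k + j) with (0 + j + k) by lia. replace k with (0 + k) at 2 by lia. apply subst_lift_a.
    + pose proof (subst_lift_c j 0 (k+j) (subst k v b) v) as HH. rewrite Nat.add_0_r in HH.
      apply bisim_sym, HH; lia.
  - simp. bisimF_tac.
  - simp. bisimF_tac; left; eauto 10.
  - simp. bisimF_tac; left. exists (S j), (S (k + j)), P. repeat split; auto; lia.
Qed.

Lemma lift_subst d c j b P : bisim (lift d (c + j) (subst j b P)) (subst j (lift d c b) (lift d (S (c + j)) P)).
Proof. apply (bisim_coind (fun x y => exists j cj P, cj = c + j /\ x = lift d cj (subst j b P) /\ y = subst j (lift d c b) (lift d (S cj) P))); eauto 10.
  clear. intros x y (j & cj & P & -> & -> & ->). destruct P.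
  - apply bisim_unfold. vsplit; try var_close.
    + subst n. replace (c + j) with (c + j + 0) by lia. replace c with (c + 0) at 2 by lia. apply lift_lift_d.
  - simp. bisimF_tac.
  - simp. bisimF_tac; left; eauto 10.
  - simp. bisimF_tac; left. exists (S j), (S (c + j)), P. repeat split; auto; lia.
Qed.


Inductive fhead (k : nat) : term -> Prop :=
| fh_var n : k <= n -> fhead k (Var n)
| fh_app a b : fhead k a -> fhead k (App a b).

CoInductive Inst : nat -> term -> term -> Prop :=
| I_free k w w' : fhead k w -> Inst k w w'
| I_var k n : Inst k (Var n) (Var n)
| I_cst k c : Inst k (Cst c) (Cst c)
| I_app k a b a' b' : Inst k a a' -> Inst k b b' -> Inst k (App a b) (App a' b')
| I_lam k a a' : Inst (S k) a a' -> Inst k (Lam a) (Lam a').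

Definition InstF (Q : nat -> term -> term -> Prop) k x y : Prop :=
  fhead k x \/ (exists n, x = Var n /\ y = Var n) \/ (exists c, x = Cst c /\ y = Cst c) \/
  (exists a1 a2 b1 b2, x = App a1 a2 /\ y = App b1 b2 /\ Q k a1 b1 /\ Q k a2 b2) \/
  (exists a b, x = Lam a /\ y = Lam b /\ Q (S k) a b).

Lemma Inst_coind (P : nat -> term -> term -> Prop) :
  (forall k x y, P k x y -> InstF (fun k a b => P k a b \/ Inst k a b) k x y) ->
  forall k x y, P k x y -> Inst k x y.
Proof.
  intro HP. cofix CIH. intros k x y H.
  destruct (HP k x y H) as [Hf|[[n [-> ->]]|[[c [-> ->]]|[[a1 [a2 [b1 [b2 [-> [-> [H1 H2]]]]]]]|[a [b [-> [-> H1]]]]]]]].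
  - apply I_free; auto.
  - apply I_var.
  - apply I_cst.
  - apply I_app; [destruct H1 as [H1|H1]|destruct H2 as [H3|H3]]; auto.
  - apply I_lam; destruct H1 as [H1|H1]; auto.
Qed.

Lemma Inst_unfold Q k x y : Inst k x y -> InstF (fun k a b => Q k a b \/ Inst k a b) k x y.
Proof. intro H; destruct H; unfold InstF.
  - left; auto.
  - right; left; eauto.
  - right; right; left; eauto.
  - right; right; right; left; do 4 eexists; split; [reflexivity|split;[reflexivity|split; right; eauto]].
  - right; right; right; right; do 2 eexists; split; [reflexivity|split;[reflexivity|right; eauto]].
Qed.

Ltac InstF_tac := unfold InstF; first [ right; left; eexists; split; reflexivity | right; right; left; eexists; split; reflexivity | right; right; right; left; do 4 eexists; split; [reflexivity|split;[reflexivity|split]] | right; right; right; right; do 2 eexists; split; [reflexivity|split;[reflexivity|idtac]] ].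

Lemma Inst_bisim_r k w w' w'' : Inst k w w' -> bisim w' w'' -> Inst k w w''.
Proof. intros H1 H2. apply (Inst_coind (fun k x z => exists y, Inst k x y /\ bisim y z)); eauto.
  clear. intros k x z [y [H1 H2]]. destruct H1.
  - left; auto.
  - inversion H2; subst. InstF_tac.
  - inversion H2; subst. InstF_tac.
  - inversion H2; subst. InstF_tac; left; eauto.
  - inversion H2; subst. InstF_tac; left; eauto.
Qed.

Lemma fhead_lift k d c b : c <= k -> fhead k b -> fhead (k + d) (lift d c b).
Proof. intros Hc H; induction H.
  - rewrite lift_Var_ge by lia. constructor; lia.
  - rewrite lift_App. constructor; auto.
Qed.

Lemma Inst_lift k d c b b' : Inst k b b' -> c <= k -> Inst (k + d) (lift d c b) (lift d c b').
Proof. intros H Hc. apply (Inst_coind (fun kd x y => exists k c b b', kd = k + d /\ c <= k /\ x = lift d c b /\ y = lift d c b' /\ Inst k b b')); eauto 10.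
  clear. intros kd x y (k & c & b & b' & -> & Hc & -> & -> & H). destruct H.
  - left. apply fhead_lift; auto.
  - vsplit; InstF_tac.
  - simp. InstF_tac.
  - simp. InstF_tac; left; eauto 10.
  - simp. InstF_tac; left. exists (S k), (S c), a, a'. repeat split; auto; lia.
Qed.

Lemma fhead_subst j i u P : fhead (S (j + i)) P -> fhead (j + i) (subst j u P).
Proof. intros H; remember (S (j + i)) as m; induction H; subst.
  - rewrite subst_Var_gt by lia. constructor; lia.
  - rewrite subst_App. constructor; auto.
Qed.

Lemma Inst_subst j i u u' P P' : Inst (S (j + i)) P P' -> Inst i u u' -> Inst (j + i) (subst j u P) (subst j u' P').
Proof. intros H Hu. apply (Inst_coind (fun ji x y => exists j P P', ji = j + i /\ x = subst j u P /\ y = subst j u' P' /\ Inst (S (j + i)) P P')); eauto 10.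
  clear H j P P'. intros ji x y (j & P & P' & -> & -> & -> & H). inversion H; subst.
  - left. apply fhead_subst; auto.
  - vsplit; try InstF_tac. apply Inst_unfold. rewrite Nat.add_comm. apply Inst_lift; auto; lia.
  - simp. InstF_tac.
  - simp. InstF_tac; left; eauto 10.
  - simp. InstF_tac; left. exists (S j), a, a'. repeat split; auto.
Qed.

Lemma Inst_subst_self d k v u : Inst d u (subst (k + d) v u).
Proof. apply (Inst_coind (fun d x y => exists kd, kd = k + d /\ y = subst kd v x)); eauto.
  clear. intros d x y (kd & -> & ->). destruct x.
  - destruct (Nat.lt_ge_cases n d).
    + rewrite subst_Var_lt by lia. InstF_tac.
    + left. constructor. auto.
  - simp. InstF_tac.
  - simp. InstF_tac; left; eauto.
  - simp. InstF_tac; left. exists (S (k + d)). split; auto; lia.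
Qed.

Lemma Inst_lift_self d e c u : Inst d u (lift e (c + d) u).
Proof. apply (Inst_coind (fun d x y => exists cd, cd = c + d /\ y = lift e cd x)); eauto.
  clear. intros d x y (cd & -> & ->). destruct x.
  - destruct (Nat.lt_ge_cases n d).
    + rewrite lift_Var_lt by lia. InstF_tac.
    + left. constructor. auto.
  - simp. InstF_tac.
  - simp. InstF_tac; left; eauto.
  - simp. InstF_tac; left. exists (S (c + d)). split; auto; lia.
Qed.

Lemma Inst_step k w w' w'' : Inst k w w' -> beta_step w' w'' ->
  Inst k w w'' \/ exists w1, beta_step w w1 /\ Inst k w1 w''.
Proof. intros H Hs. revert k w H. induction Hs as [s0 t0 H0|s0 s0' t0 Hs IHHs|s0 s0' t0 Hs IHHs|s0 s0' Hs IHHs]; intros k w H.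
  - destruct H0 as (P' & b' & -> & Hb). inversion H; subst.
    + left; apply I_free; auto.
    + inversion H4; subst.
      * left; apply I_free; constructor; auto.
      * right. exists (subst0 a0 b). split.
        -- apply compat_base. exists a0, b. split; auto. apply bisim_refl.
        -- apply Inst_bisim_r with (subst0 P' b'); [|apply bisim_sym; auto].
           apply (Inst_subst 0 k); auto.
  - inversion H; subst.
    + left; apply I_free; auto.
    + destruct (IHHs k _ ltac:(eassumption)) as [H1|[w1 [H1 H2]]].
      * left; apply I_app; auto.
      * right; exists (App w1 b); split; [apply compat_appl; auto|apply I_app; auto].
  - inversion H; subst.
    + left; apply I_free; auto.
    + destruct (IHHs k _ ltac:(eassumption)) as [H1|[w1 [H1 H2]]].
      * left; apply I_app; auto.
      * right; exists (App a w1); split; [apply compat_appr; auto|apply I_app; auto].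
  - inversion H; subst.
    + left; apply I_free; auto.
    + destruct (IHHs _ _ ltac:(eassumption)) as [H1|[w1 [H1 H2]]].
      * left; apply I_lam; auto.
      * right; exists (Lam w1); split; [apply compat_lam; auto|apply I_lam; auto].
Qed.

Context (bot : C).

Lemma fhead_haa k w : fhead k w -> head_atom_app bot w.
Proof. induction 1; constructor; auto. Qed.

Lemma Inst_haa k w w' : Inst k w w' -> head_atom_app bot w' -> head_atom_app bot w.
Proof. intros H Hh. revert w H. induction Hh; intros w HI; inversion HI; subst;
  first [solve [eapply fhead_haa; eauto] | constructor; eauto]. Qed.

Lemma Inst_hnf k w w' : Inst k w w' -> hnf bot w' -> hnf bot w.
Proof. intros H Hh. revert k w H. induction Hh; intros k w HI.
  - apply hnf_base. eapply Inst_haa; eauto.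
  - inversion HI; subst.
    + apply hnf_base; eapply fhead_haa; eauto.
    + apply hnf_lam; eauto.
Qed.

Lemma Inst_has_hnf k w w' h : Inst k w w' -> beta_star w' h -> hnf bot h -> has_hnf bot w.
Proof. intros H Hs Hh. revert w H. induction Hs; intros w HI.
  - exists w. split; [apply star_refl, bisim_refl|]. eapply Inst_hnf; [|eauto]. eapply Inst_bisim_r; eauto.
  - destruct (Inst_step _ _ _ _ HI H) as [H1|[w1 [H1 H2]]].
    + eauto.
    + destruct (IHHs Hh _ H2) as [t' [Ht1 Ht2]]. exists t'. split; auto. eapply star_step; eauto.
Qed.

Lemma nohnf_subst k v u : ~ has_hnf bot u -> ~ has_hnf bot (subst k v u).
Proof. intros H [h [Hs Hh]]. apply H. apply (Inst_has_hnf 0 u (subst k v u) h); auto.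
  pose proof (Inst_subst_self 0 k v u) as HH. rewrite Nat.add_0_r in HH. exact HH. Qed.

Lemma nohnf_lift d c u : ~ has_hnf bot u -> ~ has_hnf bot (lift d c u).
Proof. intros H [h [Hs Hh]]. apply H. apply (Inst_has_hnf 0 u (lift d c u) h); auto.
  pose proof (Inst_lift_self 0 d c u) as HH. rewrite Nat.add_0_r in HH. exact HH. Qed.


Lemma compat_bisim (R : term -> term -> Prop) :
  (forall a b a', R a b -> bisim a' a -> exists b', R a' b' /\ bisim b' b) ->
  forall a b a', compat R a b -> bisim a' a -> exists b', compat R a' b' /\ bisim b' b.
Proof. intros HR a b a' H. revert a'. induction H; intros a' Ha.
  - destruct (HR _ _ _ H Ha) as [b' [H1 H2]]. exists b'. split; auto. apply compat_base; auto.
  - inversion Ha; subst. destruct (IHcompat _ ltac:(eassumption)) as [b' [Hc1 Hc2]].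
    exists (App b' s2). split. apply compat_appl; auto. apply bisim_app; auto.
  - inversion Ha; subst. destruct (IHcompat _ ltac:(eassumption)) as [b' [Hc1 Hc2]].
    exists (App s1 b'). split. apply compat_appr; auto. apply bisim_app; auto.
  - inversion Ha; subst. destruct (IHcompat _ ltac:(eassumption)) as [b' [Hc1 Hc2]].
    exists (Lam b'). split. apply compat_lam; auto. apply bisim_lam; auto.
Qed.

Lemma star_bisim_l (R : term -> term -> Prop) :
  (forall a b a', R a b -> bisim a' a -> exists b', R a' b' /\ bisim b' b) ->
  forall a c a', star (compat R) a c -> bisim a' a -> star (compat R) a' c.
Proof. intros HR a c a' H. revert a'. induction H; intros a' Ha.
  - apply star_refl. eapply bisim_trans; eauto.
  - destruct (compat_bisim R HR _ _ _ H Ha) as [b' [H1 H2]]. eapply star_step; eauto.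
Qed.

Lemma star_trans (R : term -> term -> Prop) :
  (forall a b a', R a b -> bisim a' a -> exists b', R a' b' /\ bisim b' b) ->
  forall a b c, star (compat R) a b -> star (compat R) b c -> star (compat R) a c.
Proof. intros HR a b c H. induction H; intros Hc.
  - exact (star_bisim_l R HR _ _ _ Hc H).
  - eapply star_step; eauto.
Qed.

Lemma R_beta_bisim a b a' : R_beta a b -> bisim a' a -> exists b', R_beta a' b' /\ bisim b' b.
Proof. intros (P & q & -> & Hb) Ha. inversion Ha as [| |? ? ? ? HL HR|]; subst. inversion HL; subst.
  exists (subst0 s s2). split. exists s, s2. split; auto. apply bisim_refl.
  eapply bisim_trans; [|apply bisim_sym; eauto]. apply subst_bisim; auto.
Qed.

Lemma has_hnf_bisim a a' : bisim a' a -> has_hnf bot a' -> has_hnf bot a.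
Proof. intros H [h [Hs Hh]]. exists h. split; auto.
  eapply (star_bisim_l _ R_beta_bisim); eauto. apply bisim_sym; auto. Qed.

Lemma R_bb_bisim a b a' : R_beta_bot bot a b -> bisim a' a -> exists b', R_beta_bot bot a' b' /\ bisim b' b.
Proof. intros [H|(H1 & H2 & ->)] Ha.
  - destruct (R_beta_bisim _ _ _ H Ha) as [b' [H1 H2]]. exists b'; split; auto. left; auto.
  - exists (Cst bot). split; [|apply bisim_refl]. right. split; [|split; auto].
    + intro Hh. apply H1. eapply has_hnf_bisim; eauto.
    + intro Hb. apply H2. destruct a'; simpl in Hb; try contradiction. inversion Ha; subst. simpl; auto.
Qed.

Lemma bb_trans a b c : bb_star bot a b -> bb_star bot b c -> bb_star bot a c.
Proof. apply star_trans. apply R_bb_bisim. Qed.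

Lemma star_app_l (R : term -> term -> Prop) a a' b : star (compat R) a a' -> star (compat R) (App a b) (App a' b).
Proof. induction 1. apply star_refl, bisim_app; auto; apply bisim_refl. eapply star_step; [apply compat_appl; eauto|auto]. Qed.
Lemma star_app_r (R : term -> term -> Prop) a a' b : star (compat R) a a' -> star (compat R) (App b a) (App b a').
Proof. induction 1. apply star_refl, bisim_app; auto; apply bisim_refl. eapply star_step; [apply compat_appr; eauto|auto]. Qed.
Lemma star_lam (R : term -> term -> Prop) a a' : star (compat R) a a' -> star (compat R) (Lam a) (Lam a').
Proof. induction 1. apply star_refl, bisim_lam; auto. eapply star_step; [apply compat_lam; eauto|auto]. Qed.

Lemma bb_step_lift d c u u' : bb_step bot u u' -> bb_star bot (lift d c u) (lift d c u').
Proof. intro H. revert c. induction H; intro c.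
  - destruct H as [(P & b & -> & Hb)|(H1 & H2 & ->)].
    + simp. eapply star_step. apply compat_base. left. exists (lift d (S c) P), (lift d c b). split; auto. apply bisim_refl.
      apply star_refl. apply bisim_sym. eapply bisim_trans. apply lift_bisim; eauto.
      pose proof (lift_subst d c 0 b P) as HH. rewrite Nat.add_0_r in HH. exact HH.
    + simp. eapply star_step; [|apply star_refl, bisim_refl]. apply compat_base. right.
      split; [apply nohnf_lift; auto|split; auto].
      intro Hb. apply H2. destruct s; simp; simpl in *; auto. destruct (n <? c); simpl in Hb; auto.
  - simp. unfold bb_star, bb_step in *. apply star_app_l; auto.
  - simp. unfold bb_star, bb_step in *. apply star_app_r; auto.
  - simp. unfold bb_star, bb_step in *. apply star_lam; auto.
Qed.

Lemma bb_star_lift d c u u' : bb_star bot u u' -> bb_star bot (lift d c u) (lift d c u').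
Proof. induction 1. apply star_refl, lift_bisim; auto. eapply bb_trans; eauto. apply bb_step_lift; auto. Qed.

Lemma bb_step_subst k v u u' : bb_step bot u u' -> bb_star bot (subst k v u) (subst k v u').
Proof. intro H. revert k. induction H; intro k.
  - destruct H as [(P & b & -> & Hb)|(H1 & H2 & ->)].
    + simp. eapply star_step. apply compat_base. left. exists (subst (S k) v P), (subst k v b). split; auto. apply bisim_refl.
      apply star_refl. apply bisim_sym. eapply bisim_trans. apply subst_bisim; eauto. apply bisim_refl.
      pose proof (subst_subst k 0 v b P) as HH. rewrite Nat.add_0_r in HH. exact HH.
    + simp. eapply star_step; [|apply star_refl, bisim_refl]. apply compat_base. right.
      split; [apply nohnf_subst; auto|split; auto].
      intro Hb. destruct s; simp; simpl in *; auto.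
      apply H1. exists (Var n). split. apply star_refl, bisim_refl. apply hnf_base. constructor.
  - simp. unfold bb_star, bb_step in *. apply star_app_l; auto.
  - simp. unfold bb_star, bb_step in *. apply star_app_r; auto.
  - simp. unfold bb_star, bb_step in *. apply star_lam; auto.
Qed.

Lemma bb_star_subst k v u u' : bb_star bot u u' -> bb_star bot (subst k v u) (subst k v u').
Proof. induction 1. apply star_refl, subst_bisim; auto; apply bisim_refl. eapply bb_trans; eauto. apply bb_step_subst; auto. Qed.


Ltac simpa := repeat (rewrite ?lift_Cst, ?lift_App, ?lift_Lam, ?subst_Cst, ?subst_App, ?subst_Lam in *).

Definition bbF (Q : term -> term -> Prop) x y : Prop :=
  (exists n, y = Var n /\ bb_star bot x (Var n)) \/ (exists c, y = Cst c /\ bb_star bot x (Cst c)) \/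
  (exists t1 t2 t1' t2', y = App t1' t2' /\ bb_star bot x (App t1 t2) /\ Q t1 t1' /\ Q t2 t2') \/
  (exists r r', y = Lam r' /\ bb_star bot x (Lam r) /\ Q r r').

Lemma bb_inf_coind (P : term -> term -> Prop) :
  (forall x y, P x y -> bbF (fun a b => P a b \/ bb_inf bot a b) x y) ->
  forall x y, P x y -> bb_inf bot x y.
Proof.
  intro HP. cofix CIH. intros x y H.
  destruct (HP x y H) as [[n [-> Hs]]|[[c [-> Hs]]|[[a1 [a2 [b1 [b2 [-> [Hs [H1 H2]]]]]]]|[a [b [-> [Hs H1]]]]]]].
  - apply inf_var; auto.
  - apply inf_cst; auto.
  - eapply inf_app; [eauto|destruct H1 as [H1|H1]|destruct H2 as [H3|H3]]; auto.
  - eapply inf_lam; [eauto|destruct H1 as [H1|H1]]; auto.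
Qed.

Lemma bb_inf_unfold Q x y : bb_inf bot x y -> bbF (fun a b => Q a b \/ bb_inf bot a b) x y.
Proof. intro H; destruct H; unfold bbF.
  - left; eauto.
  - right; left; eauto.
  - right; right; left; do 4 eexists; split; [reflexivity|split;[eauto|split; right; eauto]].
  - right; right; right; do 2 eexists; split; [reflexivity|split;[eauto|right; eauto]].
Qed.

Ltac bbF_tac := unfold bbF; first [ left; eexists; split; [reflexivity|] | right; left; eexists; split; [reflexivity|] | right; right; left; do 4 eexists; split; [reflexivity|split;[|split]] | right; right; right; do 2 eexists; split; [reflexivity|split] ].

Lemma bb_inf_bisim_r x y y' : bb_inf bot x y -> bisim y y' -> bb_inf bot x y'.
Proof. intros H1 H2. apply (bb_inf_coind (fun x z => exists y, bb_inf bot x y /\ bisim y z)); eauto.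
  clear. intros x z [y [H1 H2]]. destruct H1; inversion H2; subst; bbF_tac; eauto; left; eauto. Qed.

Lemma bb_inf_prefix x x' y : bb_star bot x x' -> bb_inf bot x' y -> bb_inf bot x y.
Proof. intros Hs H. destruct H.
  - apply inf_var. eapply bb_trans; eauto.
  - apply inf_cst. eapply bb_trans; eauto.
  - eapply inf_app; eauto. eapply bb_trans; eauto.
  - eapply inf_lam; eauto. eapply bb_trans; eauto.
Qed.

Lemma bb_inf_lift d c v s : bb_inf bot v s -> bb_inf bot (lift d c v) (lift d c s).
Proof. intro H. apply (bb_inf_coind (fun x y => exists c v s, x = lift d c v /\ y = lift d c s /\ bb_inf bot v s)); eauto 10.
  clear. intros x y (c & v & s & -> & -> & H). destruct H.
  - pose proof (bb_star_lift d c _ _ H) as Hs. rewrite lift_Var in *. destruct (n <? c); bbF_tac; auto.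
  - pose proof (bb_star_lift d c _ _ H) as Hs. simpa. bbF_tac; auto.
  - pose proof (bb_star_lift d c _ _ H) as Hs. simpa. bbF_tac; eauto; left; eauto 10.
  - pose proof (bb_star_lift d c _ _ H) as Hs. simpa. bbF_tac; eauto; left; eauto 10.
Qed.

Lemma bb_inf_subst k u v s1 s2 : bb_inf bot u s1 -> bb_inf bot v s2 -> bb_inf bot (subst k v u) (subst k s2 s1).
Proof. intros H Hv. apply (bb_inf_coind (fun x y => exists k u s1, x = subst k v u /\ y = subst k s2 s1 /\ bb_inf bot u s1)); eauto 10.
  clear H k u s1. intros x y (k & u & s1 & -> & -> & H). destruct H.
  - pose proof (bb_star_subst k v _ _ H) as Hs. destruct (lt_eq_lt_dec n k) as [[Hl| E]|Hl].
    + rewrite subst_Var_lt in * by auto. bbF_tac; auto.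
    + subst n. rewrite subst_Var_eq in *. apply bb_inf_unfold. eapply bb_inf_prefix; eauto. apply bb_inf_lift; auto.
    + rewrite subst_Var_gt in * by auto. bbF_tac; auto.
  - pose proof (bb_star_subst k v _ _ H) as Hs. simpa. bbF_tac; auto.
  - pose proof (bb_star_subst k v _ _ H) as Hs. simpa. bbF_tac; eauto; left; eauto 10.
  - pose proof (bb_star_subst k v _ _ H) as Hs. simpa. bbF_tac; eauto; left; eauto 10.
Qed.

Lemma bb_inf_beta t s s' : bb_inf bot t s -> beta_step s s' -> bb_inf bot t s'.
Proof. intros H Hs. revert t H. induction Hs as [s0 t0 H0|s0 s0' t0 Hs IHHs|s0 s0' t0 Hs IHHs|s0 s0' Hs IHHs]; intros t H.
  - destruct H0 as (P & q & -> & Hb). inversion H; subst.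
    match goal with Hf : bb_inf bot ?t1 (Lam P) |- _ => inversion Hf; subst end.
    apply bb_inf_bisim_r with (subst0 P q); [|apply bisim_sym; auto].
    eapply bb_inf_prefix.
    + eapply bb_trans; [eassumption|]. eapply bb_trans; [apply star_app_l; eassumption|].
      eapply star_step; [|apply star_refl, bisim_refl]. apply compat_base. left. eexists; eexists; split; [reflexivity|apply bisim_refl].
    + apply bb_inf_subst; eassumption.
  - inversion H; subst. eapply inf_app; eauto.
  - inversion H; subst. eapply inf_app; eauto.
  - inversion H; subst. eapply inf_lam; eauto.
Qed.

End Main.

Theorem corollary5p33 (C : Type) (bot : C) (t s r : term C) :
  bb_inf bot t s -> beta_star s r -> bb_inf bot t r.
Proof.
  intros H0 Hs. revert t H0. induction Hs; intros t' H0.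
  - eapply bb_inf_bisim_r; eauto.
  - apply IHHs. eapply bb_inf_beta; eauto.
Qed.
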